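(* Let $X$ be an infinite-dimensional real Banach space and let $A \subset X$ be a convex subset with $0 \in A$. Assume there is a finite subset $O \subset X$ such that $B_X \subset A + O$. Then for every $\varepsilon > 0$ there exist a finite-codimensional subspace $Y \subset X$ and a finite subset $H \subset A$ such that $$B_Y \subset (A - H) + \varepsilon B_X.$$
   Context: $B_X$ is the closed unit ball of $X$ and $B_Y = B_X \cap Y$. Sums and differences of sets are Minkowski sums: $A + O = \{a+o : a\in A, o \in O\}$, $A - H = \{a - h : a \in A, h \in H\}$. *)

(* Defs.v *)
From HB Require Import structures.
From mathcomp Require Import all_boot all_order all_algebra.
From mathcomp Require Import all_classical all_reals all_analysis.
Set Implicit Arguments. Unset Strict Implicit. Unset Printing Implicit Defensive.
Import Order.TTheory GRing.Theory Num.Theory.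
Import numFieldNormedType.Exports.
Local Open Scope classical_set_scope.
Local Open Scope ring_scope.

Section Defs.
Variables (R : realType) (X : normedModType R).

Definition unit_ball : set X := [set x | `|x| <= 1].

Definition minkowski_sum (A O : set X) : set X := [set a + o | a in A & o in O].
Definition minkowski_diff (A H : set X) : set X := [set a - h | a in A & h in H].

Definition set_scale (e : R) (B : set X) : set X := [set e *: b | b in B].

Definition linear_subspace (Y : set X) : Prop :=
  Y 0 /\ (forall x y, Y x -> Y y -> Y (x + y)) /\
  (forall (c : R) x, Y x -> Y (c *: x)).

Definition finite_codim (Y : set X) : Prop :=
  exists (n : nat) (v : 'I_n -> X),
    forall x, exists (y : X) (c : 'I_n -> R), Y y /\ x = y + \sum_(i < n) c i *: v i.

Definition infinite_dimensional : Prop :=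
  forall (n : nat) (v : 'I_n -> X),
    exists x : X, forall c : 'I_n -> R, x <> \sum_(i < n) c i *: v i.

End Defs.

Arguments unit_ball {R} X.

(* Main.v *)
Require Import Defs.
From HB Require Import structures.
From mathcomp Require Import all_boot all_order all_algebra.
From mathcomp Require Import all_classical all_reals all_analysis.
From mathcomp Require Import ring lra.
Import Order.TTheory GRing.Theory Num.Theory.
Import numFieldNormedType.Exports.
Local Open Scope classical_set_scope.
Local Open Scope ring_scope.

Section HBsec.
Variables (R : realType) (X : lmodType R) (p : X -> R).
Arguments p : clear implicits.
Hypotheses (p_ge0 : forall x, 0 <= p x)
  (p_add : forall x y, p (x + y) <= p x + p y)
  (p_scale : forall {t : R} x, 0 < t -> p (t *: x) <= t * p x).
Variable x0 : X.
Hypothesis px0 : 1 <= p x0.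

Lemma p_hom t x : 0 < t -> t * p x <= p (t *: x).
Proof.
move=> t0; have ti : 0 < t^-1 by rewrite invr_gt0.
have := p_scale (t *: x) ti.
rewrite scalerA mulVf ?gt_eqF // scale1r => h.
by rewrite -(ler_pM2l ti) mulrA mulVf ?gt_eqF // mul1r.
Qed.

Definition Pg (G : set (X * R)) : Prop :=
  G (0, 0) /\
  (forall x r y s, G (x, r) -> G (y, s) -> G (x + y, r + s)) /\
  (forall k x r, G (x, r) -> G (k *: x, k * r)) /\
  (forall r, G (0, r) -> r = 0) /\
  (forall x r, G (x, r) -> r <= p x) /\
  G (x0, 1).

Lemma Pg_ext G : Pg G -> forall z, ~ (exists r, G (z, r)) ->
  exists G', Pg G' /\ G `<` G'.
Proof.
move=> [G00 [GD [GZ [Gfun [Gp Gx0]]]]] z nz.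
have key : forall x r y s, G (x, r) -> G (y, s) -> r - p (x - z) <= p (y + z) - s.
  move=> x r y s Gxr Gys.
  have := Gp _ _ (GD _ _ _ _ Gxr Gys).
  have := p_add (x - z) (y + z).
  have -> : x - z + (y + z) = x + y by rewrite addrACA addNr addr0.
  lra.
pose S := [set u | exists x r, G (x, r) /\ u = r - p (x - z)].
have S0 : S !=set0 by exists (0 - p (0 - z)); exists 0, 0.
have Sub : ubound S (p (0 + z) - 0).
  by move=> u [x [r [Gxr ->]]]; apply: key.
have hasub : has_ubound S by exists (p (0 + z) - 0).
pose c := sup S.
have c1 : forall x r, G (x, r) -> r - p (x - z) <= c.
  by move=> x r Gxr; apply: ub_le_sup => //; exists x, r.
have c2 : forall y s, G (y, s) -> c <= p (y + z) - s.
  move=> y s Gys; apply: ge_sup => //.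
  by move=> u [x [r [Gxr ->]]]; apply: key.
pose G' := [set u : X * R | exists x r t, G (x, r) /\ u = (x + t *: z, r + t * c)].
exists G'; split.
  split; first by exists 0, 0, 0; split => //; rewrite scale0r mul0r !addr0.
  split.
    move=> x r y s [x1 [r1 [t1 [G1 [-> ->]]]]] [x2 [r2 [t2 [G2 [-> ->]]]]].
    exists (x1 + x2), (r1 + r2), (t1 + t2); split; first exact: GD.
    by congr (_, _); rewrite ?scalerDl ?mulrDl; [rewrite addrACA | rewrite addrACA].
  split.
    move=> k x r [x1 [r1 [t1 [G1 [-> ->]]]]].
    exists (k *: x1), (k * r1), (k * t1); split; first exact: GZ.
    by congr (_, _); rewrite ?scalerDr ?mulrDr ?scalerA ?mulrA.
  split.
    move=> r [x1 [r1 [t1 [G1 []]]]].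
    have [->|t0] := eqVneq t1 0.
      rewrite scale0r addr0 mul0r addr0 => hx ->.
      by apply: Gfun; rewrite hx.
    move=> /esym/eqP; rewrite addr_eq0 => /eqP hx _; exfalso; apply: nz.
    exists (- t1^-1 * r1).
    have -> : z = (- t1^-1) *: x1.
      by rewrite hx scalerN scaleNr opprK scalerA mulVf // scale1r.
    exact: GZ.
  split.
    move=> x r [x1 [r1 [t1 [G1 [-> ->]]]]].
    have [t0|t0|->] := ltgtP t1 0.
    -
      pose s := - t1; have s0 : 0 < s by rewrite /s oppr_gt0.
      have si0 : 0 < s^-1 by rewrite invr_gt0.
      have := c1 _ _ (GZ s^-1 _ _ G1).
      have -> : s^-1 *: x1 - z = s^-1 *: (x1 + t1 *: z).
        by rewrite scalerDr scalerA /s invrN mulNr mulVf ?lt_eqF // scaleN1r.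
      move=> h.
      have h3 := p_scale (x1 + t1 *: z) si0.
      have h4 : s^-1 * r1 - s^-1 * p (x1 + t1 *: z) <= c by lra.
      have si : s * s^-1 = 1 by rewrite mulfV // gt_eqF.
      have : s * (s^-1 * r1 - s^-1 * p (x1 + t1 *: z)) <= s * c by rewrite ler_pM2l.
      rewrite mulrBr !mulrA si !mul1r /s mulNr => h2.
      lra.
    - pose s := t1; have s0 : 0 < s by [].
      have si0 : 0 < s^-1 by rewrite invr_gt0.
      have := c2 _ _ (GZ s^-1 _ _ G1).
      have -> : s^-1 *: x1 + z = s^-1 *: (x1 + t1 *: z).
        by rewrite scalerDr scalerA /s mulVf ?gt_eqF // scale1r.
      move=> h.
      have h3 := p_scale (x1 + t1 *: z) si0.
      have h4 : c <= s^-1 * p (x1 + t1 *: z) - s^-1 * r1 by lra.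
      have si : s * s^-1 = 1 by rewrite mulfV // gt_eqF.
      have : s * c <= s * (s^-1 * p (x1 + t1 *: z) - s^-1 * r1) by rewrite ler_pM2l.
      rewrite mulrBr !mulrA si !mul1r /s => h2.
      lra.
    - by rewrite scale0r mul0r !addr0; exact: Gp.
  by exists x0, 1, 0; split => //; rewrite scale0r mul0r !addr0.
split.
  by move=> [x r] Gxr; exists x, r, 0; split => //; rewrite scale0r mul0r !addr0.
move=> /(_ (z, c)) h; apply: nz; exists c; apply: h.
by exists 0, 0, 1; split => //; rewrite scale1r mul1r !add0r.
Qed.

Lemma p0_le0 : p 0 <= 0.
Proof.
have h : 0 < 2^-1 :> R by rewrite invr_gt0.
have := p_scale 0 h; rewrite scaler0 => h2.
have : (1 - 2^-1) * p 0 <= 0 by rewrite mulrBl mul1r subr_le0.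
rewrite pmulr_rle0 //; lra.
Qed.

Lemma Pg_G0 : Pg [set u | exists t, u = (t *: x0, t)].
Proof.
split; first by exists 0; rewrite scale0r.
split; first by move=> x r y s [t1 [-> ->]] [t2 [-> ->]]; exists (t1 + t2); rewrite scalerDl.
split; first by move=> k x r [t [-> ->]]; exists (k * t); rewrite scalerA.
split.
  move=> r [t [h ->]]; apply/eqP/negP => /negP t0.
  have : x0 = 0 by rewrite -[x0]scale1r -(mulVf t0) -scalerA -h scaler0.
  move=> x00; have := p0_le0; have := px0; rewrite x00; lra.
split.
  move=> x r [t [-> ->]].
  have [t0|t0] := ltP 0 t.
    have := @p_hom t x0 t0.
    have : t * 1 <= t * p x0 by rewrite ler_pM2l.
    lra.
  exact: le_trans t0 (p_ge0 _).
by exists 1; rewrite scale1r.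
Qed.

Lemma HB_exists : exists f : X -> R,
  (forall x y, f (x + y) = f x + f y) /\ (forall k x, f (k *: x) = k * f x) /\
  (forall x, f x <= p x) /\ f x0 = 1.
Proof.
pose Q G := G = set0 \/ Pg G.
have Qch : forall F : set (set (X * R)), F `<=` Q -> total_on F subset ->
    Q (\bigcup_(G in F) G).
  move=> F FQ Ftot.
  have mem1 : forall a, (\bigcup_(G in F) G) a -> exists G, F G /\ Pg G /\ G a.
    move=> a [G FG Ga]; exists G; split => //; split => //.
    by case: (FQ _ FG) => // G0; move: Ga; rewrite G0.
  have mem2 : forall a b, (\bigcup_(G in F) G) a -> (\bigcup_(G in F) G) b ->
      exists G, F G /\ Pg G /\ G a /\ G b.
    move=> a b /mem1 [G1 [F1 [P1 G1a]]] /mem1 [G2 [F2 [P2 G2b]]].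
    have [h|h] := Ftot _ _ F1 F2.
      by exists G2; do 3 split => //; apply: h.
    by exists G1; do 3 split => //; apply: h.
  case: (pselect (exists a, (\bigcup_(G in F) G) a)) => [[a Ua]|nU]; last first.
    left; apply/seteqP; split => // b Ub; apply: nU; by exists b.
  right; have [G [FG [[G00 [_ [_ [_ [_ Gx0]]]]] _]]] := mem1 _ Ua.
  split; first by exists G.
  split.
    move=> x r y s /mem2 h /h [H [FH [[_ [HD _]] [Ha Hb]]]].
    by exists H => //; apply: HD.
  split.
    move=> k x r /mem1 [H [FH [[_ [_ [HZ _]]] Ha]]].
    by exists H => //; apply: HZ.
  split.
    by move=> r /mem1 [H [FH [[_ [_ [_ [Hf _]]]] Ha]]]; apply: Hf.
  split.
    by move=> x r /mem1 [H [FH [[_ [_ [_ [_ [Hp _]]]]] Ha]]]; apply: Hp.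
  by exists G.
have [A [QA Amax]] := Zorn_bigcup Qch.
have PA : Pg A.
  case: QA => // A0; exfalso.
  apply: (Amax [set u | exists t, u = (t *: x0, t)]); last by right; exact: Pg_G0.
  rewrite A0; split; first by move=> ?.
  by move=> /(_ (0, 0)) h; have := h (ex_intro _ 0 (esym (congr1 (fun v => (v, 0)) (scale0r x0)))).
have Aall : forall x, exists r, A (x, r).
  move=> x; apply: contrapT => nx.
  have [G' [PG' AG']] := @Pg_ext A PA x nx.
  by apply: (Amax _ AG'); right.
have [f Af] := choice Aall.
move: PA => [A00 [AD [AZ [Afun [Ap Ax0]]]]].
have uniq : forall x r s, A (x, r) -> A (x, s) -> r = s.
  move=> x r s Ar As.
  have := AD _ _ _ _ Ar (AZ (-1) _ _ As).
  rewrite scaleN1r mulN1r subrr => /Afun /eqP; rewrite subr_eq0 => /eqP //.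
exists f; split.
  by move=> x y; apply: (uniq (x + y)); [apply: Af | apply: AD; apply: Af].
split.
  by move=> k x; apply: (uniq (k *: x)); [apply: Af | apply: AZ; apply: Af].
split; first by move=> x; apply: Ap; apply: Af.
by apply: (uniq x0); [apply: Af | apply: Ax0].
Qed.

End HBsec.
Section Sep.
Variables (R : realType) (X : normedModType R) (A : set X) (eps : R).
Hypotheses (eps0 : 0 < eps) (A0 : A 0)
  (Aconv : forall a b (l : R), A a -> A b -> 0 <= l -> l <= 1 -> A (l *: a + (1 - l) *: b)).
Variable x1 : X.
Hypothesis x1far : forall a, A a -> eps < `|x1 - a|.

Definition Cs z := exists a, A a /\ `|z - a| < eps.
Definition Ss x := [set t : R | 0 < t /\ Cs (t^-1 *: x)].
Definition pm x := inf (Ss x).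

Lemma Cs_conv u v l : Cs u -> Cs v -> 0 <= l -> l <= 1 -> Cs (l *: u + (1 - l) *: v).
Proof.
move=> [a [Aa ua]] [b [Ab vb]] l0 l1; exists (l *: a + (1 - l) *: b); split.
  exact: Aconv.
have -> : l *: u + (1 - l) *: v - (l *: a + (1 - l) *: b) =
   l *: (u - a) + (1 - l) *: (v - b).
  by rewrite !scalerBr opprD addrACA.
apply: (le_lt_trans (ler_normD _ _)).
rewrite !normrZ !ger0_norm ?subr_ge0 //.
have [->|lp] := eqVneq l 0; first by rewrite mul0r add0r subr0 mul1r.
have lp0 : 0 < l by rewrite lt_neqAle eq_sym lp.
have h1 : l * `|u - a| < l * eps by rewrite ltr_pM2l.
have h2 : (1 - l) * `|v - b| <= (1 - l) * eps by rewrite ler_wpM2l ?subr_ge0 // ltW.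
lra.
Qed.

Lemma Ss_big x t : 0 < t -> `|x| < eps * t -> Ss x t.
Proof.
move=> t0 h; split => //; exists 0; split => //.
rewrite subr0 normrZ ger0_norm ?invr_ge0 ?ltW //.
by rewrite ltr_pdivrMl // mulrC.
Qed.

Lemma Ss_n0 x : Ss x !=set0.
Proof.
exists ((`|x| + 1) / eps); apply: Ss_big.
  by apply: divr_gt0 => //; apply: ltr_pwDr.
rewrite mulrC divfK ?gt_eqF //; lra.
Qed.

Lemma Ss_lb x : has_lbound (Ss x).
Proof. by exists 0 => t [t0 _]; exact: ltW. Qed.

Lemma pm_ge0 x : 0 <= pm x.
Proof. by apply: lb_le_inf; [exact: Ss_n0 | move=> t [t0 _]; exact: ltW]. Qed.

Lemma pm_le x t : Ss x t -> pm x <= t.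
Proof. by move=> h; apply: ge_inf => //; exact: Ss_lb. Qed.

Lemma pm_bound x : pm x <= `|x| / eps.
Proof.
apply/ler_addgt0Pr => e e0; apply: pm_le; apply: Ss_big.
  by apply: ltr_pwDr => //; apply: divr_ge0 => //; exact: ltW.
rewrite mulrDr [eps * (_ / _)]mulrC divfK ?gt_eqF //.
by apply: ltr_pwDr => //; exact: mulr_gt0.
Qed.

Lemma pm_add x y : pm (x + y) <= pm x + pm y.
Proof.
apply/ler_addgt0Pr => e e0.
have e2 : 0 < e / 2 by apply: divr_gt0.
have [s [s0 Cs1] hs] := inf_adherent e2 (conj (Ss_n0 x) (Ss_lb x)).
have [t [t0 Ct1] ht] := inf_adherent e2 (conj (Ss_n0 y) (Ss_lb y)).
have st0 : 0 < s + t by apply: addr_gt0.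
suff : pm (x + y) <= s + t by lra.
apply: pm_le; split => //.
have hl0 : 0 <= s / (s + t) by apply: divr_ge0; exact: ltW.
have hl1 : s / (s + t) <= 1.
  by rewrite ler_pdivrMr // mul1r lerDl; exact: ltW.
have := Cs_conv _ _ (s / (s + t)) Cs1 Ct1 hl0 hl1.
have -> : s / (s + t) *: (s^-1 *: x) + (1 - s / (s + t)) *: (t^-1 *: y) =
   (s + t)^-1 *: (x + y).
  rewrite !scalerA scalerDr; congr (_ *: _ + _ *: _).
    by rewrite mulrC mulrA mulVf ?gt_eqF // mul1r.
  by field; apply/andP; split; rewrite gt_eqF.
by [].
Qed.

Lemma pm_scale l x : 0 < l -> pm (l *: x) <= l * pm x.
Proof.
move=> l0; apply/ler_addgt0Pr => e e0.
have el : 0 < e / l by apply: divr_gt0.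
have [s [s0 Cs1] hs] := inf_adherent el (conj (Ss_n0 x) (Ss_lb x)).
suff : pm (l *: x) <= l * s.
  have : l * s < l * (pm x + e / l) by rewrite ltr_pM2l.
  rewrite mulrDr [l * (e / l)]mulrC divfK ?gt_eqF //; lra.
apply: pm_le; split; first exact: mulr_gt0.
rewrite scalerA; have -> : (l * s)^-1 * l = s^-1 by rewrite invfM mulrAC mulVf ?gt_eqF // mul1r.
by [].
Qed.

Lemma pm_x1 : 1 <= pm x1.
Proof.
rewrite leNgt; apply/negP => /(inf_lt (Ss_n0 x1)) [t [t0 [a [Aa ha]]] t1].
have := x1far _ (Aconv _ _ _ Aa A0 (ltW t0) (ltW t1)).
rewrite scaler0 addr0.
have -> : x1 - t *: a = t *: (t^-1 *: x1 - a).
  by rewrite scalerBr scalerA mulfV ?gt_eqF // scale1r.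
rewrite normrZ gtr0_norm //.
have : t * `|t^-1 *: x1 - a| < t * eps by rewrite ltr_pM2l.
have : t * eps < 1 * eps by rewrite ltr_pM2r.
lra.
Qed.

Lemma pm_A a : A a -> pm a < 1.
Proof.
move=> Aa.
pose u := 1 + eps / (2 * (`|a| + 1)).
have d0 : 0 < eps / (2 * (`|a| + 1)).
  by apply: divr_gt0 => //; apply: mulr_gt0 => //; apply: ltr_pwDr.
have u1 : 1 < u by rewrite /u ltrDl.
have u0 : 0 < u by lra.
suff hS : Ss a u^-1 by apply: (le_lt_trans (pm_le _ _ hS)); rewrite invf_lt1.
split; first by rewrite invr_gt0.
exists a; split => //; rewrite invrK.
have -> : u *: a - a = (u - 1) *: a by rewrite scalerBl scale1r.
rewrite normrZ ger0_norm ?subr_ge0 ?ltW //.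
have -> : u - 1 = eps / (2 * (`|a| + 1)) by rewrite /u addrAC subrr add0r.
rewrite mulrAC ltr_pdivrMr; last by apply: mulr_gt0 => //; apply: ltr_pwDr.
have : eps * `|a| < eps * (`|a| + 1) by rewrite ltr_pM2l // ltrDl.
have : 0 < eps * (`|a| + 1) by apply: mulr_gt0 => //; apply: ltr_pwDr.
rewrite mulrCA -[eps * (`|a| + 1)]/(eps * (`|a| + 1)).
set k := eps * (`|a| + 1).
lra.
Qed.

Lemma separation_sec : exists f : X -> R, (forall x y, f (x + y) = f x + f y) /\
    (forall (k : R) x, f (k *: x) = k * f x) /\
    (forall x, `|f x| <= eps^-1 * `|x|) /\ (forall a, A a -> f a < f x1).
Proof.
have [f [fD [fZ [fp fx1]]]] := @HB_exists R X pm pm_ge0 pm_add pm_scale x1 pm_x1.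
exists f; split => //; split => //; split.
  move=> x; rewrite ler_norml; apply/andP; split.
    have := fp (- x); rewrite -scaleN1r fZ scaleN1r.
    have := pm_bound (- x); rewrite normrN mulrC; lra.
  have := fp x; have := pm_bound x; rewrite mulrC; lra.
move=> a Aa; rewrite fx1.
exact: le_lt_trans (fp a) (pm_A _ Aa).
Qed.

End Sep.

Lemma conv_of (R : realType) (X : normedModType R) (A : set X) :
  convex_set (A : set (convex_lmodType X)) ->
  forall a b (l : R), A a -> A b -> 0 <= l -> l <= 1 -> A (l *: a + (1 - l) *: b).
Proof.
move=> cA a b l Aa Ab l0 l1.
have := cA a b (Itv01 l0 l1) (mem_set Aa) (mem_set Ab).
by rewrite inE.
Qed.

Lemma ker_closed (R : realType) (X : normedModType R) (f : X -> R) (M : R) :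
  (forall x y, f (x + y) = f x + f y) -> (forall (k : R) x, f (k *: x) = k * f x) ->
  (forall x, `|f x| <= M * `|x|) -> closed [set x | f x = 0].
Proof.
move=> fD fZ fb x hx; apply: contrapT => fx.
have fx0 : 0 < `|f x| by rewrite normr_gt0; apply/eqP.
pose M' := `|M| + 1.
have M'0 : 0 < M' by rewrite /M' ltr_pwDr.
have fb' : forall z, `|f z| <= M' * `|z|.
  move=> z; apply: (le_trans (fb z)); apply: ler_wpM2r => //.
  by rewrite /M'; apply: (le_trans (ler_norm M)); rewrite lerDl.
have r0 : 0 < `|f x| / M' by apply: divr_gt0.
have [y [/= fy bxy]] := hx _ (nbhsx_ballx x _ r0).
move: bxy; rewrite -ball_normE /ball_ /= => bxy.
have : f (x - y) = f x.
  by rewrite fD -scaleN1r fZ fy mulr0 addr0.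
move=> e; have := fb' (x - y); rewrite e.
have : M' * `|x - y| < M' * (`|f x| / M') by rewrite ltr_pM2l.
rewrite [M' * (_ / _)]mulrC divfK ?gt_eqF //.
lra.
Qed.

Section Final.
Variables (R : realType) (X : normedModType R).

Lemma codim_step (Y : set X) (f : X -> R) :
  linear_subspace Y -> finite_codim Y ->
  (forall x y, f (x + y) = f x + f y) -> (forall (k : R) x, f (k *: x) = k * f x) ->
  finite_codim (Y `&` [set x | f x = 0]).
Proof.
move=> [Y0 [YD YZ]] [n [v hv]] fD fZ.
have fN : forall x, f (- x) = - f x by move=> x; rewrite -scaleN1r fZ mulN1r.
case: (pselect (exists y0, Y y0 /\ f y0 <> 0)) => [[y0 [Yy0 fy0]]|nall].
  pose y1 := (f y0)^-1 *: y0.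
  have Yy1 : Y y1 by apply: YZ.
  have fy1 : f y1 = 1 by rewrite fZ mulVf //; apply/eqP.
  exists n.+1, (fun i => if unlift ord_max i is Some j then v j else y1).
  move=> x; have [y [c [Yy ->]]] := hv x.
  exists (y - f y *: y1), (fun i => if unlift ord_max i is Some j then c j else f y).
  split.
    split; first by rewrite -scaleNr; apply: YD => //; apply: YZ.
    by rewrite /= fD fN fZ fy1 mulr1 subrr.
  rewrite big_ord_recr /= unlift_none.
  have -> : \sum_(i < n) (if unlift ord_max (widen_ord (leqnSn n) i) is Some j
       then c j else f y) *: (if unlift ord_max (widen_ord (leqnSn n) i) is Some j
       then v j else y1) = \sum_(i < n) c i *: v i.
    apply: eq_bigr => i _.
    have -> : widen_ord (leqnSn n) i = lift ord_max i.
      by apply: val_inj; rewrite [RHS]lift_max.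
    by rewrite liftK.
  by rewrite [RHS]addrCA subrK addrC.
exists n, v => x; have [y [c [Yy ->]]] := hv x.
exists y, c; split => //; split => //=.
by apply: contrapT => fy; apply: nall; exists y.
Qed.

Lemma lin_sub_inter (Y : set X) (f : X -> R) :
  linear_subspace Y ->
  (forall x y, f (x + y) = f x + f y) -> (forall (k : R) x, f (k *: x) = k * f x) ->
  linear_subspace (Y `&` [set x | f x = 0]).
Proof.
move=> [Y0 [YD YZ]] fD fZ; split.
  split => //=; by rewrite -(scale0r (0 : X)) fZ mul0r.
split.
  by move=> x y [Yx /= fx] [Yy /= fy]; split; [apply: YD | rewrite /= fD fx fy addr0].
by move=> k x [Yx /= fx]; split; [apply: YZ | rewrite /= fZ fx mulr0].
Qed.

End Final.

Lemma main_seq (R : realType) (X : normedModType R) (A : set X) (eps : R) :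
  0 < eps -> A 0 ->
  (forall a b (l : R), A a -> A b -> 0 <= l -> l <= 1 -> A (l *: a + (1 - l) *: b)) ->
  forall s : seq X, exists (Y : set X) (H : set X),
    linear_subspace Y /\ closed Y /\ finite_codim Y /\ finite_set H /\ H `<=` A /\
    (forall y o, Y y -> o \in s -> A (y - o) ->
       minkowski_sum (minkowski_diff A H) (set_scale eps (unit_ball X)) y).
Proof.
move=> eps0 A0 Aconv; elim => [|o s IH].
  exists setT, set0; split; first by split.
  split; first exact: closedT.
  split.
    exists 0%N, (fun _ => 0) => x; exists x, (fun _ => 0); split => //.
    by rewrite big_ord0 addr0.
  split; first exact: finite_set0.
  split; first exact: sub0set.
  by move=> y o _; rewrite in_nil.
have [Y [H [lY [cY [fY [fH [HA hY]]]]]]] := IH.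
have mono : forall H', H `<=` H' -> forall y,
    minkowski_sum (minkowski_diff A H) (set_scale eps (unit_ball X)) y ->
    minkowski_sum (minkowski_diff A H') (set_scale eps (unit_ball X)) y.
  move=> H' HH' y [u [a Aa [h Hh <-]] [w Ew <-]].
  exists (a - h); last by exists w.
  by exists a => //; exists h => //; apply: HH'.
case: (pselect (exists h, A h /\ `|o + h| <= eps)) => [[h [Ah oh]]|nh].
  exists Y, (H `|` [set h]); split => //; split => //; split => //.
  split; first by rewrite finite_setU; split => //; exact: finite_set1.
  split; first by move=> z [Hz|->] //; apply: HA.
  move=> y o' Yy; rewrite in_cons => /orP [/eqP -> | o's] Ayo; last first.
    by apply: (mono _ (@subsetUl _ H [set h])); apply: (hY y o').
  exists (y - o - h).
    by exists (y - o) => //; exists h => //; right.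
  exists (o + h).
    exists (eps^-1 *: (o + h)).
      change (`|eps^-1 *: (o + h)| <= 1); rewrite normrZ gtr0_norm ?invr_gt0 //.
      by rewrite ler_pdivrMl // mulr1.
    by rewrite scalerA mulfV ?gt_eqF // scale1r.
  by rewrite (addrC o h) addrA !subrK.
have far : forall a, A a -> eps < `|- o - a|.
  move=> a Aa; rewrite ltNge; apply/negP => hle; apply: nh; exists a; split => //.
  by rewrite -opprD normrN in hle.
have [f [fD [fZ [fb fsep]]]] := @separation_sec R X A eps eps0 A0 Aconv (- o) far.
exists (Y `&` [set x | f x = 0]), H.
split; first exact: lin_sub_inter.
split; first by apply: closedI => //; exact: ker_closed fD fZ fb.
split; first exact: codim_step.
split => //; split => //.
move=> y o' [Yy /= fy]; rewrite in_cons => /orP [/eqP -> | o's] Ayo; last first.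
  exact: (hY y o').
by have := fsep _ Ayo; rewrite fD fy add0r ltxx.
Qed.

Theorem theorem4p2 (R : realType) (X : completeNormedModType R)
    (A : set X) (O : set X) :
  infinite_dimensional X ->
  convex_set (A : set (convex_lmodType X)) ->
  A 0 ->
  finite_set O ->
  unit_ball X `<=` minkowski_sum A O ->
  forall eps : R, 0 < eps ->
    exists (Y : set X) (H : set X),
      linear_subspace Y /\ closed Y /\ finite_codim Y /\
      finite_set H /\ H `<=` A /\
      (unit_ball X `&` Y) `<=` minkowski_sum (minkowski_diff A H) (set_scale eps (unit_ball X)).
Proof.
move=> _ cA A0 fO BAO eps eps0.
have Aconv := @conv_of R X A cA.
have [s Os] := (finite_seqP O).1 fO.
have [Y [H [lY [cY [fY [fH [HA hY]]]]]]] := @main_seq R X A eps eps0 A0 Aconv s.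
exists Y, H; do 5 (split => //).
move=> y [By Yy].
case: (BAO y By) => a0 h1 [q1 h2 ya].
apply: (hY y q1 Yy).
  by move: h2; rewrite Os.
by rewrite -ya addrK.
Qed.
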